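(* Let $\mathcal L$ be a linearly ordered non-discrete MV-algebra. On the set of filters (in the sense below), define $\mathcal F\equiv\mathcal G$ iff $\mathcal F\sqsubseteq\!\!\to\mathcal G=\mathcal G\sqsubseteq\!\!\to\mathcal F=\{1\}$. Then $\equiv$ is an equivalence relation. Moreover, it is a congruence for ${}^+$ and $\sqsubseteq\!\!\to$: if $\mathcal F_1\equiv\mathcal F_2$ and $\mathcal G_1\equiv\mathcal G_2$, then $\mathcal F_1^+\equiv\mathcal F_2^+$ and $\mathcal F_1\sqsubseteq\!\!\to\mathcal G_1\equiv\mathcal F_2\sqsubseteq\!\!\to\mathcal G_2$.
   Context: $\mathcal L=(L,\oplus,\lnot,0)$ is a linearly ordered MV-algebra. We write $1=\lnot0$, $x\otimes y=\lnot(\lnot x\oplus\lnot y)$, and $x\to y=\lnot x\oplus y$. Non-discrete means no element has an immediate successor or an immediate predecessor. A ''filter'' means a nonempty proper upward-closed subset $\mathcal F$ of $L$ with kernel $\mathcal K(\mathcal F)=\{z:\forall a\notin\mathcal F,\ z\to a\notin\mathcal F\}=\{1\}$. For upward-closed $\mathcal F$ and $a\in L$, let $\mathcal F_a=\{z:z\to a\notin\mathcal F\}$ and $\mathcal F^+=\mathcal F_0=\{z:\lnot z\notin\mathcal F\}$. For $\mathcal F\subseteq\mathcal G$ we put $\mathcal F\sqsubseteq\!\!\to\mathcal G=\bigcap_{a\in L\setminus\mathcal G}\mathcal F_a$, and in general $\mathcal F\sqsubseteq\!\!\to\mathcal G:=(\mathcal F\cap\mathcal G)\sqsubseteq\!\!\to\mathcal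 G$. *)

(* Defs.v *)
From Stdlib Require Import Classical.

Record MVAlgebra := {
  mv_car :> Type;
  mv_oplus : mv_car -> mv_car -> mv_car;
  mv_neg : mv_car -> mv_car;
  mv_zero : mv_car;
  mv_oplus_assoc : forall x y z, mv_oplus x (mv_oplus y z) = mv_oplus (mv_oplus x y) z;
  mv_oplus_comm : forall x y, mv_oplus x y = mv_oplus y x;
  mv_oplus_zero : forall x, mv_oplus x mv_zero = x;
  mv_neg_neg : forall x, mv_neg (mv_neg x) = x;
  mv_oplus_one : forall x, mv_oplus x (mv_neg mv_zero) = mv_neg mv_zero;
  mv_luk : forall x y,
    mv_oplus (mv_neg (mv_oplus (mv_neg x) y)) y
    = mv_oplus (mv_neg (mv_oplus (mv_neg y) x)) x
}.

Section MVDefs.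
Variable L : MVAlgebra.

Definition mv_one : L := mv_neg L (mv_zero L).
Definition mv_otimes (x y : L) : L :=
  mv_neg L (mv_oplus L (mv_neg L x) (mv_neg L y)).
Definition mv_impl (x y : L) : L := mv_oplus L (mv_neg L x) y.
Definition mv_le (x y : L) : Prop := mv_impl x y = mv_one.
Definition mv_lt (x y : L) : Prop := mv_le x y /\ x <> y.

Definition linearly_ordered : Prop := forall x y : L, mv_le x y \/ mv_le y x.

Definition immediate_successor (x y : L) : Prop :=
  mv_lt x y /\ ~ (exists z, mv_lt x z /\ mv_lt z y).
Definition immediate_predecessor (x y : L) : Prop :=
  mv_lt y x /\ ~ (exists z, mv_lt y z /\ mv_lt z x).

Definition non_discrete : Prop :=
  (forall x, ~ exists y, immediate_successor x y) /\
  (forall x, ~ exists y, immediate_predecessor x y).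

Definition upward_closed (F : L -> Prop) : Prop :=
  forall x y, F x -> mv_le x y -> F y.

Definition kernel (F : L -> Prop) (z : L) : Prop :=
  forall a, ~ F a -> ~ F (mv_impl z a).

Definition is_filter (F : L -> Prop) : Prop :=
  (exists x, F x) /\ (exists x, ~ F x) /\ upward_closed F /\
  (forall z, kernel F z <-> z = mv_one).

Definition Fsub (F : L -> Prop) (a : L) (z : L) : Prop := ~ F (mv_impl z a).

Definition Fplus (F : L -> Prop) : L -> Prop := Fsub F (mv_zero L).

(* F ⊑→ G := (F ∩ G) ⊑→ G = ⋂_{a ∉ G} (F ∩ G)_a  (for F ⊆ G this agrees with
   ⋂_{a ∉ G} F_a) *)
Definition Fimp (F G : L -> Prop) (z : L) : Prop :=
  forall a, ~ G a -> Fsub (fun x => F x /\ G x) a z.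

Definition is_singleton_one (F : L -> Prop) : Prop := forall z, F z <-> z = mv_one.

Definition fequiv (F G : L -> Prop) : Prop :=
  is_singleton_one (Fimp F G) /\ is_singleton_one (Fimp G F).

End MVDefs.

(* Main.v *)
Require Import Defs.
From Stdlib Require Import Classical.

Arguments mv_oplus {m}.
Arguments mv_neg {m}.
Arguments mv_zero {m}.
Arguments mv_one {L}.
Arguments mv_le {L}.
Arguments mv_impl {L}.

Notation "x +' y" := (mv_oplus x y) (at level 50, left associativity).
Notation "! x" := (mv_neg x) (at level 35, right associativity).

Lemma zero_l {L : MVAlgebra} (x : L) : mv_zero +' x = x.
Proof. rewrite mv_oplus_comm. apply mv_oplus_zero. Qed.

Lemma neg_one {L : MVAlgebra} : ! (@mv_one L) = mv_zero.
Proof. unfold mv_one. apply mv_neg_neg. Qed.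

Lemma one_r {L : MVAlgebra} (x : L) : x +' mv_one = mv_one.
Proof. apply mv_oplus_one. Qed.

Lemma one_l {L : MVAlgebra} (x : L) : mv_one +' x = mv_one.
Proof. rewrite mv_oplus_comm. apply mv_oplus_one. Qed.

Lemma compl {L : MVAlgebra} (x : L) : !x +' x = mv_one.
Proof.
  pose proof (mv_luk L x mv_one) as H.
  rewrite one_r, neg_one, zero_l in H. auto.
Qed.

Lemma le_ex {L : MVAlgebra} (x y : L) : mv_le x y <-> exists z, y = x +' z.
Proof.
  unfold mv_le, mv_impl. split.
  - intro H. exists (! (! y +' x)).
    pose proof (mv_luk L x y) as Hl. rewrite H, neg_one, zero_l in Hl.
    rewrite mv_oplus_comm. exact Hl.
  - intros [z ->]. rewrite mv_oplus_assoc, compl. apply one_l.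
Qed.

Lemma le_refl {L : MVAlgebra} (x : L) : mv_le x x.
Proof. apply le_ex. exists mv_zero. rewrite mv_oplus_zero; auto. Qed.

Lemma le_trans {L : MVAlgebra} (x y z : L) : mv_le x y -> mv_le y z -> mv_le x z.
Proof.
  rewrite !le_ex. intros [a ->] [b ->]. exists (a +' b). apply eq_sym, mv_oplus_assoc.
Qed.

Lemma le_plus_r {L : MVAlgebra} (x c : L) : mv_le x (x +' c).
Proof. apply le_ex. eauto. Qed.

Lemma le_plus_l {L : MVAlgebra} (x c : L) : mv_le x (c +' x).
Proof. rewrite mv_oplus_comm. apply le_plus_r. Qed.

Lemma le_mono {L : MVAlgebra} (x y c : L) : mv_le x y -> mv_le (x +' c) (y +' c).
Proof.
  rewrite !le_ex. intros [a ->]. exists a.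
  rewrite <- !mv_oplus_assoc, (mv_oplus_comm _ a c). auto.
Qed.

Lemma le_mono2 {L : MVAlgebra} (x y x' y' : L) :
  mv_le x x' -> mv_le y y' -> mv_le (x +' y) (x' +' y').
Proof.
  intros H1 H2. apply le_trans with (x' +' y). apply le_mono; auto.
  rewrite (mv_oplus_comm _ x' y), (mv_oplus_comm _ x' y'). apply le_mono; auto.
Qed.

Lemma le_zero {L : MVAlgebra} (x : L) : mv_le mv_zero x.
Proof. apply le_ex. exists x. rewrite zero_l; auto. Qed.

Lemma le_antisym {L : MVAlgebra} (x y : L) : mv_le x y -> mv_le y x -> x = y.
Proof.
  unfold mv_le, mv_impl. intros H1 H2.
  pose proof (mv_luk L x y) as Hl. rewrite H1, H2, neg_one, zero_l, zero_l in Hl.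
  auto.
Qed.

Lemma le_neg {L : MVAlgebra} (x y : L) : mv_le x y -> mv_le (!y) (!x).
Proof.
  unfold mv_le, mv_impl. rewrite mv_neg_neg, mv_oplus_comm. auto.
Qed.

Lemma luk_le {L : MVAlgebra} (x y : L) : mv_le y x -> ! (! x +' y) +' y = x.
Proof.
  unfold mv_le, mv_impl. intro H. rewrite mv_luk, H, neg_one, zero_l. auto.
Qed.

Lemma neg_inj {L : MVAlgebra} (x y : L) : !x = !y -> x = y.
Proof. intro H. rewrite <- (mv_neg_neg L x), H, mv_neg_neg. auto. Qed.


Definition Dr {L : MVAlgebra} (X Y : L -> Prop) :=
  forall e, e <> mv_zero -> exists a, ~ Y a /\ X (e +' a).
Definition Kr {L : MVAlgebra} (X : L -> Prop) := Dr X X.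
Definition Ex {L : MVAlgebra} (F G : L -> Prop) (e : L) :=
  exists b, ~ G b /\ F (e +' b) /\ G (e +' b).

Lemma comparable {L : MVAlgebra} (X Y : L -> Prop) : linearly_ordered L ->
  upward_closed L X -> upward_closed L Y ->
  (forall x, X x -> Y x) \/ (forall x, Y x -> X x).
Proof.
  intros Hlin HX HY.
  destruct (classic (forall x, X x -> Y x)) as [H|H]; [left; auto|right].
  apply not_all_ex_not in H. destruct H as [x Hx].
  apply imply_to_and in Hx. destruct Hx as [Xx nYx].
  intros y Yy. destruct (Hlin x y) as [H|H].
  - eapply HX; eauto.
  - exfalso. apply nYx. eapply HY; eauto.
Qed.

Lemma below {L : MVAlgebra} (Y : L -> Prop) b y : linearly_ordered L ->
  upward_closed L Y -> ~ Y b -> Y y -> mv_le b y.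
Proof.
  intros Hlin HY nb Yy. destruct (Hlin b y) as [H|H]; auto.
  exfalso. apply nb. eapply HY; eauto.
Qed.

Lemma impl_neg {L : MVAlgebra} (e a : L) : mv_impl (!e) a = e +' a.
Proof. unfold mv_impl. rewrite mv_neg_neg. auto. Qed.

Lemma single_iff {L : MVAlgebra} (X Y : L -> Prop) :
  is_singleton_one L (Fimp L X Y) <->
  forall e, e <> mv_zero -> exists a, ~ Y a /\ X (e +' a) /\ Y (e +' a).
Proof.
  split.
  - intros H e He. apply NNPP. intro Hn.
    assert (Hz : ! e <> mv_one).
    { intro E. apply He. apply neg_inj. rewrite E. unfold mv_one. auto. }
    apply Hz. apply H. intros a Ha [H1 H2]. apply Hn. exists a.
    rewrite impl_neg in H1, H2. auto.
  - intros H z. split.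
    + intro Hf. apply NNPP. intro Hz.
      assert (He : ! z <> mv_zero).
      { intro E. apply Hz. rewrite <- (mv_neg_neg L z), E. reflexivity. }
      destruct (H _ He) as (a & Ha & H1 & H2).
      apply (Hf a Ha). unfold mv_impl. auto.
    + intros -> a Ha [_ H2]. apply Ha.
      unfold mv_impl, mv_one in H2. rewrite mv_neg_neg, zero_l in H2. auto.
Qed.

Lemma fequiv_char {L : MVAlgebra} (X Y : L -> Prop) : linearly_ordered L ->
  upward_closed L X -> upward_closed L Y ->
  (fequiv L X Y <-> Kr X /\ Kr Y /\ Dr X Y /\ Dr Y X).
Proof.
  intros Hlin HX HY. unfold fequiv. rewrite !single_iff. unfold Kr, Dr. split.
  - intros [H1 H2]. repeat split; intros e He.
    + destruct (H2 e He) as (a & ? & ? & ?); eauto.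
    + destruct (H1 e He) as (a & ? & ? & ?); eauto.
    + destruct (H1 e He) as (a & ? & ? & ?); eauto.
    + destruct (H2 e He) as (a & ? & ? & ?); eauto.
  - intros (KX & KY & DXY & DYX).
    destruct (comparable X Y Hlin HX HY) as [S|S]; split; intros e He.
    + destruct (DXY e He) as (a & ? & ?); eauto.
    + destruct (KX e He) as (a & ? & ?); eauto.
    + destruct (KY e He) as (a & ? & ?); eauto.
    + destruct (DYX e He) as (a & ? & ?); eauto.
Qed.

Lemma halving {L : MVAlgebra} (e : L) : non_discrete L -> linearly_ordered L ->
  e <> mv_zero -> exists d, d <> mv_zero /\ mv_le (d +' d) e.
Proof.
  intros [Hnd _] Hlin He.
  assert (H : exists d0, mv_lt L mv_zero d0 /\ mv_lt L d0 e).
  { apply NNPP. intro Hn. apply (Hnd mv_zero). exists e. split; auto.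
    split; auto. apply le_zero. }
  destruct H as (d0 & [_ H0] & [H1 H2]).
  set (r := ! (! e +' d0)).
  assert (Hr : r +' d0 = e) by (apply luk_le; auto).
  destruct (Hlin d0 r) as [H|H].
  - exists d0. split; auto. rewrite <- Hr, (mv_oplus_comm _ r d0).
    apply le_mono2; auto; apply le_refl.
  - exists r. split.
    + intro E. apply H2. apply le_antisym; auto.
      unfold mv_le, mv_impl. unfold r in E. rewrite <- (mv_neg_neg L (! e +' d0)), E.
      reflexivity.
    + rewrite <- Hr. apply le_mono2; auto; apply le_refl.
Qed.

Lemma D_trans {L : MVAlgebra} (X Y Z : L -> Prop) : non_discrete L -> linearly_ordered L ->
  upward_closed L X -> upward_closed L Y -> Dr X Y -> Dr Y Z -> Dr X Z.
Proof.
  intros Hnd Hlin HX HY DXY DYZ e He.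
  destruct (halving e Hnd Hlin He) as (d & Hd & Hdd).
  destruct (DYZ d Hd) as (a & Za & Ya).
  destruct (DXY d Hd) as (b & Yb & Xb).
  exists a. split; auto. eapply HX; [exact Xb|].
  apply le_trans with (d +' (d +' a)).
  - apply le_mono2; [apply le_refl|]. eapply below; eauto.
  - rewrite mv_oplus_assoc. apply le_mono; auto.
Qed.

Lemma shift {L : MVAlgebra} (X Y : L -> Prop) e y : linearly_ordered L ->
  upward_closed L X -> upward_closed L Y -> Dr X Y -> e <> mv_zero -> Y y -> X (e +' y).
Proof.
  intros Hlin HX HY D He Yy. destruct (D e He) as (a & Ya & Xa).
  eapply HX; [exact Xa|]. rewrite !(mv_oplus_comm _ e). apply le_mono.
  eapply below; eauto.
Qed.

Lemma Fplus_iff {L : MVAlgebra} (X : L -> Prop) z : Fplus L X z <-> ~ X (! z).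
Proof.
  unfold Fplus, Fsub, mv_impl. rewrite mv_oplus_zero. tauto.
Qed.

Lemma plus_lemma {L : MVAlgebra} (X Y : L -> Prop) : upward_closed L Y ->
  Dr X Y -> Dr (Fplus L Y) (Fplus L X).
Proof.
  intros HY D e He. destruct (D e He) as (b & Yb & Xb).
  exists (! (e +' b)). rewrite !Fplus_iff, mv_neg_neg. split; auto.
  intro H. apply Yb. eapply HY; [exact H|].
  apply le_trans with (! (! b)); [|rewrite mv_neg_neg; apply le_refl].
  apply le_neg.
  pose proof (mv_luk L (! b) e) as Hl. rewrite mv_neg_neg in Hl.
  rewrite (mv_oplus_comm _ e (! (e +' b))), (mv_oplus_comm _ e b), Hl.
  apply le_plus_l.
Qed.

Lemma upc_Fplus {L : MVAlgebra} (X : L -> Prop) : upward_closed L X ->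
  upward_closed L (Fplus L X).
Proof.
  intros HX x y Hx Hxy. rewrite Fplus_iff in *. intro H. apply Hx.
  eapply HX; [exact H|]. apply le_neg; auto.
Qed.

Lemma upc_Ex {L : MVAlgebra} (F G : L -> Prop) : upward_closed L F -> upward_closed L G ->
  upward_closed L (Ex F G).
Proof.
  intros HF HG x y (b & Hb & H1 & H2) Hxy. exists b. split; auto.
  split; [eapply HF|eapply HG]; eauto; apply le_mono; auto.
Qed.

Lemma Fimp_Ex {L : MVAlgebra} (F G : L -> Prop) z : Fimp L F G z <-> Fplus L (Ex F G) z.
Proof.
  rewrite Fplus_iff. unfold Fimp, Fsub, Ex, mv_impl. split.
  - intros H (b & Hb & H1 & H2). apply (H b Hb). auto.
  - intros H a Ha H2. apply H. exists a. auto.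
Qed.

Lemma Dr_ext {L : MVAlgebra} (X X' Y Y' : L -> Prop) :
  (forall x, X x <-> X' x) -> (forall x, Y x <-> Y' x) -> Dr X Y -> Dr X' Y'.
Proof.
  intros EX EY D e He. destruct (D e He) as (a & H1 & H2). exists a.
  rewrite <- EX, <- EY. auto.
Qed.

Lemma upc_ext {L : MVAlgebra} (X X' : L -> Prop) :
  (forall x, X x <-> X' x) -> upward_closed L X -> upward_closed L X'.
Proof. intros E H x y Hx Hxy. rewrite <- E in *. eauto. Qed.

Lemma Kr_inter {L : MVAlgebra} (F G : L -> Prop) : linearly_ordered L ->
  upward_closed L F -> upward_closed L G -> Kr F -> Kr G ->
  Kr (fun x => F x /\ G x).
Proof.
  intros Hlin HF HG KF KG. unfold Kr.
  destruct (comparable F G Hlin HF HG) as [S|S].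
  - apply (Dr_ext F _ F); auto; intro x; split; try tauto; intros; split; auto.
  - apply (Dr_ext G _ G); auto; intro x; split; try tauto; intros; split; auto.
Qed.

Lemma assoc4 {L : MVAlgebra} (d e b : L) : d +' (e +' (d +' b)) = ((d +' d) +' e) +' b.
Proof.
  rewrite (mv_oplus_assoc _ e d b), (mv_oplus_comm _ e d), !mv_oplus_assoc. auto.
Qed.

Lemma K_Ex {L : MVAlgebra} (F G : L -> Prop) : non_discrete L -> linearly_ordered L ->
  upward_closed L F -> upward_closed L G -> Kr F -> Kr G -> Kr (Ex F G).
Proof.
  intros Hnd Hlin HF HG KF KG.
  pose proof (Kr_inter F G Hlin HF HG KF KG) as KC.
  set (C := fun x => F x /\ G x) in KC.
  assert (HC : upward_closed L C).
  { intros x y [H1 H2] H. split; [eapply HF|eapply HG]; eauto. }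
  intros e He.
  destruct (halving e Hnd Hlin He) as (d & Hd & Hdd).
  destruct (KC d Hd) as (f & Cf & Cdf).
  destruct (KG d Hd) as (b & Gb & Gdb).
  destruct (Hlin f (d +' b)) as [H|H].
  - exists mv_zero. split.
    + intros (b' & Hb' & H1 & H2). rewrite zero_l in H2. auto.
    + exists b. split; auto. apply (HC (d +' f)); auto.
      rewrite mv_oplus_zero. apply le_trans with (d +' (d +' b)).
      * apply le_mono2; auto; apply le_refl.
      * rewrite mv_oplus_assoc. apply le_mono; auto.
  - set (e' := ! (! f +' (d +' b))).
    assert (Hf : e' +' (d +' b) = f) by (apply luk_le; auto).
    exists e'. split.
    + intros (b' & Hb' & H1 & H2). apply Cf.
      apply (HC (e' +' b')); [split; auto|].
      rewrite <- Hf. rewrite !(mv_oplus_comm _ e'). apply le_mono.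
      apply (below G); auto.
    + exists b. split; auto. apply (HC (d +' f)); auto.
      rewrite <- Hf, assoc4. rewrite (mv_oplus_comm _ e e'), (mv_oplus_comm _ (d +' d) e').
      apply le_mono. rewrite !(mv_oplus_comm _ e'). apply le_mono; auto.
Qed.

Lemma assoc5 {L : MVAlgebra} (h q e a : L) :
  h +' ((q +' e) +' (q +' a)) = ((h +' (q +' q)) +' e) +' a.
Proof.
  rewrite (mv_oplus_comm _ q e), <- (mv_oplus_assoc _ e q (q +' a)),
    (mv_oplus_assoc _ q q a), (mv_oplus_comm _ e), !mv_oplus_assoc.
  rewrite <- (mv_oplus_assoc _ _ a e), (mv_oplus_comm _ a e), mv_oplus_assoc. auto.
Qed.

Lemma lemA {L : MVAlgebra} (F1 F2 G : L -> Prop) : non_discrete L -> linearly_ordered L ->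
  upward_closed L F1 -> upward_closed L F2 -> upward_closed L G ->
  Dr F2 F1 -> Kr (Ex F1 G) -> Dr (Ex F2 G) (Ex F1 G).
Proof.
  intros Hnd Hlin HF1 HF2 HG D K e He.
  destruct (halving e Hnd Hlin He) as (d & Hd & Hdd).
  destruct (K d Hd) as (e0 & N0 & (b & Gb & H1 & H2)).
  pose proof (shift F2 F1 d _ Hlin HF2 HF1 D Hd H1) as H3.
  exists e0. split; auto. exists b. split; auto. split.
  - eapply HF2; [exact H3|]. rewrite !mv_oplus_assoc.
    apply le_mono, le_mono; auto.
  - eapply HG; [exact H2|]. apply le_mono, le_mono.
    apply le_trans with (d +' d); auto. apply le_plus_r.
Qed.

Lemma lemB {L : MVAlgebra} (F G1 G2 : L -> Prop) : non_discrete L -> linearly_ordered L ->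
  upward_closed L F -> upward_closed L G1 -> upward_closed L G2 ->
  Dr G1 G2 -> Dr G2 G1 -> Kr (Ex F G1) -> Dr (Ex F G2) (Ex F G1).
Proof.
  intros Hnd Hlin HF HG1 HG2 D12 D21 K e He.
  destruct (halving e Hnd Hlin He) as (h & Hh & Hhh).
  destruct (halving h Hnd Hlin Hh) as (q & Hq & Hqq).
  destruct (K q Hq) as (e0 & N0 & (b & Gb & H1 & H2)).
  destruct (D12 q Hq) as (a & Ga & Gqa).
  assert (Hb : mv_le b (q +' a)) by (apply (below G1); auto).
  pose proof (shift G2 G1 h _ Hlin HG2 HG1 D21 Hh H2) as H3.
  assert (Hle : mv_le (h +' ((q +' e0) +' b)) ((e +' e0) +' a)).
  { apply le_trans with (h +' ((q +' e0) +' (q +' a))).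
    - apply le_mono2; [apply le_refl|]. apply le_mono2; auto; apply le_refl.
    - rewrite assoc5. apply le_mono, le_mono.
      apply le_trans with (h +' h); auto. apply le_mono2; auto; apply le_refl. }
  exists e0. split; auto. exists a. split; auto. split.
  - eapply HF; [exact H1|]. eapply le_trans; [|exact Hle]. apply le_plus_l.
  - eapply HG2; eauto.
Qed.

Lemma filter_facts {L : MVAlgebra} (F : L -> Prop) : is_filter L F ->
  upward_closed L F /\ Kr F.
Proof.
  intros (_ & _ & HU & HK). split; auto. intros e He.
  assert (Hz : ! e <> mv_one).
  { intro E. apply He. apply neg_inj. rewrite E. unfold mv_one. auto. }
  rewrite <- HK in Hz. unfold kernel in Hz.
  apply NNPP. intro Hn. apply Hz. intros a Ha Hi. apply Hn. exists a.
  rewrite impl_neg in Hi. auto.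
Qed.

Lemma DE {L : MVAlgebra} (F1 F2 G1 G2 : L -> Prop) : non_discrete L -> linearly_ordered L ->
  upward_closed L F1 -> upward_closed L F2 -> upward_closed L G1 -> upward_closed L G2 ->
  Kr F1 -> Kr G1 -> Kr G2 ->
  Dr F2 F1 -> Dr G1 G2 -> Dr G2 G1 -> Dr (Ex F2 G2) (Ex F1 G1).
Proof.
  intros Hnd Hlin HF1 HF2 HG1 HG2 K1 KG1 KG2 DF D12 D21.
  apply D_trans with (Ex F1 G2); auto.
  - apply upc_Ex; auto.
  - apply upc_Ex; auto.
  - apply lemA; auto. apply K_Ex; auto.
  - apply lemB; auto. apply K_Ex; auto.
Qed.

Theorem mainTheorem17 (L : MVAlgebra)
  (Hlin : linearly_ordered L) (Hnd : non_discrete L) :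
  (forall F, is_filter L F -> fequiv L F F) /\
  (forall F G, is_filter L F -> is_filter L G -> fequiv L F G -> fequiv L G F) /\
  (forall F G H, is_filter L F -> is_filter L G -> is_filter L H ->
     fequiv L F G -> fequiv L G H -> fequiv L F H) /\
  (forall F1 F2 G1 G2,
     is_filter L F1 -> is_filter L F2 -> is_filter L G1 -> is_filter L G2 ->
     fequiv L F1 F2 -> fequiv L G1 G2 ->
     fequiv L (Fplus L F1) (Fplus L F2) /\
     fequiv L (Fimp L F1 G1) (Fimp L F2 G2)).
Proof.
  split; [|split; [|split]].
  - intros F HF. destruct (filter_facts F HF) as [U K].
    apply fequiv_char; auto.
  - intros F G _ _ [H1 H2]. split; auto.
  - intros F G H HF HG HH E1 E2.
    destruct (filter_facts F HF) as [UF KF].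
    destruct (filter_facts G HG) as [UG KG].
    destruct (filter_facts H HH) as [UH KH].
    apply fequiv_char in E1; auto. apply fequiv_char in E2; auto.
    apply fequiv_char; auto.
    destruct E1 as (_ & _ & D1 & D2). destruct E2 as (_ & _ & D3 & D4).
    repeat split; auto; [apply D_trans with G|apply D_trans with G]; auto.
  - intros F1 F2 G1 G2 HF1 HF2 HG1 HG2 E1 E2.
    destruct (filter_facts F1 HF1) as [UF1 KF1].
    destruct (filter_facts F2 HF2) as [UF2 KF2].
    destruct (filter_facts G1 HG1) as [UG1 KG1].
    destruct (filter_facts G2 HG2) as [UG2 KG2].
    apply fequiv_char in E1; auto. apply fequiv_char in E2; auto.
    destruct E1 as (_ & _ & D1 & D2). destruct E2 as (_ & _ & D3 & D4).
    split.
    + apply fequiv_char; auto using upc_Fplus.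
      repeat split; apply plus_lemma; auto.
    + assert (EQ1 : forall x, Fplus L (Ex F1 G1) x <-> Fimp L F1 G1 x)
        by (intro; rewrite Fimp_Ex; tauto).
      assert (EQ2 : forall x, Fplus L (Ex F2 G2) x <-> Fimp L F2 G2 x)
        by (intro; rewrite Fimp_Ex; tauto).
      assert (U1 : upward_closed L (Ex F1 G1)) by (apply upc_Ex; auto).
      assert (U2 : upward_closed L (Ex F2 G2)) by (apply upc_Ex; auto).
      apply fequiv_char; auto.
      * apply (upc_ext _ _ EQ1). apply upc_Fplus; auto.
      * apply (upc_ext _ _ EQ2). apply upc_Fplus; auto.
      * repeat split; (eapply Dr_ext; [eassumption|eassumption|]); apply plus_lemma; auto.
        -- apply K_Ex; auto.
        -- apply K_Ex; auto.
        -- apply DE; auto.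
        -- apply DE; auto.
Qed.
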